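(* Let $K$ be a field, $n\ge3$, and $\boldsymbol{\lambda}=(\lambda_1,\dots,\lambda_n)$ a vector of positive integers with $\gcd(\lambda_1,\dots,\lambda_n)>n-2$. Then the monomial ideal $I(\boldsymbol{\lambda})\subseteq K[x_1,\dots,x_n]$ is normal.
   Context: $I(\boldsymbol{\lambda})$ is the integral closure in $K[x_1,\dots,x_n]$ of $(x_1^{\lambda_1},\dots,x_n^{\lambda_n})$. An ideal is normal if all its positive powers are integrally closed. *)

(* Defs.v *)
From HB Require Import structures.
From mathcomp Require Import all_boot all_order all_algebra.
From mathcomp Require Import mpoly.
Set Implicit Arguments. Unset Strict Implicit. Unset Printing Implicit Defensive.
Import GRing.Theory.
Local Open Scope ring_scope.

Section IdealDefs.
Variable R : comNzRingType.

Definition ideal_gen (s : seq R) : R -> Prop :=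
  fun f => exists c : 'I_(size s) -> R, f = \sum_(i < size s) c i * s`_i.

Definition ideal_pow (I : R -> Prop) (k : nat) : R -> Prop :=
  fun f => exists (m : nat) (r : 'I_m -> R) (a : 'I_m -> 'I_k -> R),
    (forall i j, I (a i j)) /\ f = \sum_(i < m) r i * \prod_(j < k) a i j.

Definition integral_over_ideal (I : R -> Prop) (f : R) : Prop :=
  exists (k : nat) (a : nat -> R), (0 < k)%N /\
    (forall i, (1 <= i <= k)%N -> ideal_pow I i (a i)) /\
    f ^+ k + \sum_(1 <= i < k.+1) a i * f ^+ (k - i) = 0.

Definition integral_closure (I : R -> Prop) : R -> Prop :=
  integral_over_ideal I.

Definition integrally_closed (I : R -> Prop) : Prop :=
  forall f, integral_over_ideal I f -> I f.

Definition normal_ideal (I : R -> Prop) : Prop :=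
  forall k : nat, (0 < k)%N -> integrally_closed (ideal_pow I k).

End IdealDefs.

Definition I_lambda (K : fieldType) (n : nat) (lam : 'I_n -> nat)
  : {mpoly K[n]} -> Prop :=
  integral_closure (ideal_gen [seq 'X_i ^+ lam i | i <- enum 'I_n]).

(* Main.v *)
Require Import Defs.
From HB Require Import structures.
From mathcomp Require Import all_boot all_order all_algebra.
From mathcomp Require Import mpoly.
From mathcomp Require Import zify.
Set Implicit Arguments. Unset Strict Implicit. Unset Printing Implicit Defensive.
Import GRing.Theory.
Local Open Scope ring_scope.
Lemma splitL m n (i : 'I_m) : split (lshift n i) = inl i.
Proof. exact: (unsplitK (inl i)). Qed.
Lemma splitR m n (i : 'I_n) : split (rshift m i) = inr i.
Proof. exact: (unsplitK (inr i)). Qed.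

Section IP.
Variable R : comNzRingType.
Variable P : R -> Prop.

Lemma ip0 k : ideal_pow P k 0.
Proof. by exists 0%N, (fun _ => 0), (fun _ _ => 0); split; [case | rewrite big_ord0]. Qed.

Lemma ipD k f g : ideal_pow P k f -> ideal_pow P k g -> ideal_pow P k (f + g).
Proof.
move=> [m1 [r1 [a1 [H1 ->]]]] [m2 [r2 [a2 [H2 ->]]]].
exists (m1 + m2)%N.
exists (fun i => match split i with inl i1 => r1 i1 | inr i2 => r2 i2 end).
exists (fun i => match split i with inl i1 => a1 i1 | inr i2 => a2 i2 end).
split; first by move=> i j; case: (split i).
by rewrite big_split_ord /=; congr (_ + _); apply: eq_bigr => i _;
  rewrite ?splitL ?splitR.
Qed.

Lemma ipM k r f : ideal_pow P k f -> ideal_pow P k (r * f).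
Proof.
move=> [m [r1 [a [H ->]]]]; exists m, (fun i => r * r1 i), a; split => //.
by rewrite mulr_sumr; apply: eq_bigr => i _; rewrite mulrA.
Qed.

Lemma ip1 k r (a : 'I_k -> R) : (forall j, P (a j)) -> ideal_pow P k (r * \prod_j a j).
Proof.
move=> H; exists 1%N, (fun _ => r), (fun _ j => a j); split => //.
by rewrite big_ord1.
Qed.

Lemma ipN k f : ideal_pow P k f -> ideal_pow P k (- f).
Proof. by move=> H; rewrite -mulN1r; apply: ipM. Qed.

Lemma ipall f : ideal_pow P 0 f.
Proof.
exists 1%N, (fun _ => f), (fun _ _ => 0); split; first by move=> _ [].
by rewrite big_ord1 big_ord0 mulr1.
Qed.

Lemma ipS k f p : ideal_pow P k f -> P p -> ideal_pow P (k + 1) (f * p).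
Proof.
move=> [m [r [a [H ->]]]] Pp.
exists m, r, (fun i j => match split j with inl j1 => a i j1 | inr _ => p end).
split; first by move=> i j; case: (split j).
rewrite mulr_suml; apply: eq_bigr => i _.
rewrite big_split_ord /= big_ord1 -mulrA; congr (_ * (_ * _)).
  by apply: eq_bigr => j _; rewrite splitL.
by rewrite splitR.
Qed.

Lemma ipmono k t f : ideal_pow P (k + t) f -> ideal_pow P k f.
Proof.
move=> [m [r [a [H ->]]]].
exists m, (fun i => r i * \prod_(j < t) a i (rshift k j)), (fun i j => a i (lshift t j)).
split => //; apply: eq_bigr => i _; rewrite big_split_ord /=.
by rewrite mulrA -!mulrA [X in _ * X = _]mulrC.
Qed.

Lemma ipsum k (T : Type) (s : seq T) (F : T -> R) :
  (forall x, ideal_pow P k (F x)) -> ideal_pow P k (\sum_(x <- s) F x).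
Proof.
move=> H; elim: s => [|x s IH]; first by rewrite big_nil; apply: ip0.
by rewrite big_cons; apply: ipD.
Qed.

End IP.
Section Psi.
Variables (K : fieldType) (n : nat) (w : 'I_n -> nat).
Local Notation MP := {mpoly K[n]}.

Definition wdeg (m : 'X_{1..n}) := (\sum_(i < n) m i * w i)%N.

Definition psi (p : MP) : {poly MP} :=
  mmap (polyC \o (@mpolyC n K)) (fun i => ('X_i)%:P * 'X^(w i)) p.

Lemma psiM p q : psi (p * q) = psi p * psi q.
Proof. exact: rmorphM. Qed.
Lemma psiD p q : psi (p + q) = psi p + psi q.
Proof. exact: rmorphD. Qed.
Lemma psiN p : psi (- p) = - psi p.
Proof. exact: rmorphN. Qed.
Lemma psi0 : psi 0 = 0.
Proof. exact: rmorph0. Qed.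
Lemma psiX_ m : psi 'X_[m] = ('X_[m])%:P * 'X^(wdeg m).
Proof.
rewrite /psi mmapX /mmap1.
under eq_bigr => i _ do rewrite exprMn -exprM.
rewrite big_split /= prodrXr.
under eq_bigr => i _ do rewrite -rmorphXn.
rewrite -rmorph_prod -mpolyXE_id /wdeg.
by congr (_ * 'X^_); apply: eq_bigr => i _; rewrite mulnC.
Qed.

Lemma psi_sum (T : Type) (s : seq T) (F : T -> MP) :
  psi (\sum_(x <- s) F x) = \sum_(x <- s) psi (F x).
Proof.
elim: s => [|x s IH]; first by rewrite !big_nil psi0.
by rewrite !big_cons psiD IH.
Qed.

Definition D (N : nat) (p : MP) := exists h, psi p = 'X^N * h.

Lemma D0 N : D N 0.
Proof. by exists 0; rewrite psi0 mulr0. Qed.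
Lemma DD N p q : D N p -> D N q -> D N (p + q).
Proof. by move=> [h1 e1] [h2 e2]; exists (h1 + h2); rewrite psiD e1 e2 mulrDr. Qed.
Lemma DMl N r p : D N p -> D N (r * p).
Proof. by move=> [h e]; exists (psi r * h); rewrite psiM e mulrCA. Qed.
Lemma DN N p : D N p -> D N (- p).
Proof. by move=> [h e]; exists (- h); rewrite psiN e mulrN. Qed.
Lemma Dmono N M p : (N <= M)%N -> D M p -> D N p.
Proof.
move=> le [h e]; exists ('X^(M - N) * h).
by rewrite e mulrA -exprD subnKC.
Qed.
Lemma DMM s t p q : D s p -> D t q -> D (s + t) (p * q).
Proof.
by move=> [h1 e1] [h2 e2]; exists (h1 * h2); rewrite psiM e1 e2 exprD mulrACA.
Qed.
Lemma DX m : D (wdeg m) 'X_[m].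
Proof. by exists ('X_[m])%:P; rewrite psiX_ mulrC. Qed.

Lemma Dprod N i (F : 'I_i -> MP) : (forall j, D N (F j)) -> D (i * N) (\prod_j F j).
Proof.
elim: i F => [|i IH] F H; first by rewrite big_ord0; exists 1; rewrite mulr1 /psi rmorph1.
rewrite big_ord_recr mulSn addnC; apply: DMM => //; exact: IH.
Qed.

Lemma Dip (P : MP -> Prop) N i f : (forall g, P g -> D N g) -> ideal_pow P i f -> D (i * N) f.
Proof.
move=> H [m [r [a [Ha ->]]]]; apply: (big_ind (D (i * N))); [exact: D0| exact: DD|].
by move=> j _; apply: DMl; apply: Dprod => j'; apply: H.
Qed.

Lemma psiE p : psi p = \sum_(m <- msupp p) (p@_m *: 'X_[m])%:P * 'X^(wdeg m).
Proof.
rewrite {1}[p]mpolyE psi_sum; apply: eq_bigr => m _.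
by rewrite -mul_mpolyC psiM psiX_ /psi mmapC /= mulrA -rmorphM.
Qed.

Lemma Dsupp N p m : D N p -> m \in msupp p -> (N <= wdeg m)%N.
Proof.
move=> [h e] mp; rewrite leqNgt; apply/negP => lt.
have : ((psi p)`_(wdeg m))@_m = p@_m.
  rewrite psiE coef_sum raddf_sum /= (bigD1_seq m) ?msupp_uniq //= big1 ?addr0.
    by rewrite coefCM coefXn eqxx mulr1 (mcoeffZ (p@_m) 'X_[m] m) mcoeffX eqxx mulr1.
  move=> m' ne; rewrite coefCM coefXn.
  case: eqP => _; last by rewrite mulr0 mcoeff0.
  by rewrite mulr1 (mcoeffZ (p@_m') 'X_[m'] m) mcoeffX (negbTE ne) mulr0.
rewrite e coefXnM lt mcoeff0 => /esym /eqP; rewrite mcoeff_eq0.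
by rewrite mp.
Qed.

Lemma poly_val (R : idomainType) (g : {poly R}) : g != 0 ->
  exists v h, g = 'X^v * h /\ h`_0 != 0.
Proof.
move: {2}(size g) (leqnn (size g)) => s; elim: s g => [|s IH] g.
  by rewrite leqn0 size_poly_eq0 => ->.
move=> les nz; have [c0|c0] := eqVneq g`_0 0; last by exists 0%N, g; rewrite expr0 mul1r.
have : root g 0 by rewrite /root horner_coef0 c0.
move/factor_theorem => [q eq]; rewrite subr0 in eq.
have nzq : q != 0 by apply: contraNneq nz => q0; rewrite eq q0 mul0r.
have lq : (size q <= s)%N by move: les; rewrite eq size_mulX.
have [v [h [e1 e2]]] := IH q lq nzq.
by exists v.+1, h; rewrite eq e1 exprSr mulrAC.
Qed.

Lemma psiXn p m : psi (p ^+ m) = psi p ^+ m.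
Proof. exact: rmorphXn. Qed.

Lemma Dint N k f (a : nat -> MP) : (0 < k)%N ->
  (forall i, (1 <= i <= k)%N -> D (i * N) (a i)) ->
  f ^+ k + \sum_(1 <= i < k.+1) a i * f ^+ (k - i) = 0 -> D N f.
Proof.
move=> k0 Ha Eq.
have [g0|gn0] := eqVneq (psi f) 0; first by exists 0; rewrite g0 mulr0.
have [v [h [eg h0]]] := poly_val gn0.
have [le|lt] := leqP N v.
  by exists ('X^(v - N) * h); rewrite eg mulrA -exprD subnKC.
pose E (p : {poly MP}) := exists q, p = 'X^((k * v).+1) * q.
have HE : E (psi (\sum_(1 <= i < k.+1) a i * f ^+ (k - i))).
  rewrite big_seq; apply: (big_ind (fun p => E (psi p))).
  - by exists 0; rewrite psi0 mulr0.
  - by move=> x y [q1 e1] [q2 e2]; exists (q1 + q2); rewrite psiD e1 e2 mulrDr.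
  move=> i; rewrite mem_index_iota => /andP [i1 ik].
  have [c ec] := Ha i (introT andP (conj i1 ik)).
  have [e ee] : exists e, (i * N + v * (k - i) = (k * v).+1 + e)%N.
    have H : ((k * v).+1 <= i * N + v * (k - i))%N by nia.
    by exists (i * N + v * (k - i) - (k * v).+1)%N; rewrite subnKC.
  exists ('X^e * (c * h ^+ (k - i))).
  rewrite psiM psiXn ec eg exprMn -exprM [RHS]mulrA -exprD -ee exprD.
  by rewrite -!mulrA; congr (_ * _); rewrite mulrCA.
move: Eq => /(congr1 psi); rewrite psiD psiXn psi0 eg.
move: HE => [q ->] /eqP; rewrite addr_eq0 => /eqP.
rewrite exprMn -exprM mulnC exprS [_ * 'X^(k * v)]mulrC -mulrA -mulrN => /mulfI.
have nz : ('X^(k * v) : {poly MP}) != 0 by rewrite expf_neq0 // polyX_eq0.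
move=> /(_ nz) /(congr1 (fun p => p.[0])).
rewrite horner_exp !hornerE oppr0 horner_coef0 => /eqP.
by rewrite expf_eq0 k0 (negbTE h0).
Qed.

End Psi.
Section Wdeg.
Variables (n : nat) (w : 'I_n -> nat).

Lemma wdegD m1 m2 : wdeg w (m1 + m2)%MM = (wdeg w m1 + wdeg w m2)%N.
Proof. by rewrite /wdeg -big_split; apply: eq_bigr => i _; rewrite mnmDE mulnDl. Qed.

Lemma wdeg0 : wdeg w 0%MM = 0%N.
Proof. by rewrite /wdeg big1 // => i _; rewrite mnm0E. Qed.

Lemma wdegU i c : wdeg w (U_(i) *+ c)%MM = (c * w i)%N.
Proof.
rewrite /wdeg (bigD1 i) //= big1 ?addn0.
  by rewrite mulmnE mnm1E eqxx mul1n.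
by move=> j ne; rewrite mulmnE mnm1E eq_sym (negbTE ne).
Qed.

Lemma wdegB m b : (b <= m)%MM -> wdeg w (m - b)%MM = (wdeg w m - wdeg w b)%N.
Proof. by move=> le; rewrite -{2}(submK le) wdegD addnK. Qed.
End Wdeg.

Section Comb.
Variables (n d : nat) (mu : 'I_n -> nat).
Hypothesis mu_pos : forall i, (0 < mu i)%N.

Definition Pm := (\prod_(i < n) mu i)%N.
Definition wt i := (\prod_(j < n | j != i) mu j)%N.

Lemma mu_wt i : (mu i * wt i = Pm)%N.
Proof. by rewrite /Pm (bigD1 i). Qed.

Lemma wt_pos i : (0 < wt i)%N.
Proof. by apply: prodn_gt0 => j. Qed.

Definition qm (m : 'X_{1..n}) := (\sum_(i < n) m i %/ mu i)%N.

Lemma sel t m : (t <= qm m)%N -> exists b, (b <= m)%MM /\ wdeg wt b = (t * Pm)%N.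
Proof.
elim: t m => [|t IH] m le.
  by exists 0%MM; rewrite wdeg0; split => //; apply/mnm_lepP => i; rewrite mnm0E.
have [i mi] : exists i, (mu i <= m i)%N.
  apply/existsP; apply: contraLR le; rewrite negb_exists => /forallP H.
  suff -> : qm m = 0%N by [].
  rewrite /qm; apply: big1 => i _.
  by apply: divn_small; rewrite ltnNge H.
pose u := (U_(i) *+ mu i)%MM.
have um : (u <= m)%MM.
  apply/mnm_lepP => j; rewrite mulmnE mnm1E.
  by case: eqP => [<-|_]; rewrite ?mul1n ?mul0n.
have : (t <= qm (m - u)%MM)%N.
  move: le; rewrite /qm (bigD1 i) //= [X in (t <= X)%N](bigD1 i) //=.
  rewrite mnmBE mulmnE mnm1E eqxx mul1n.
  have -> : (m i %/ mu i = (m i - mu i) %/ mu i + 1)%N.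
    by rewrite -{1}(subnK mi) divnDr // divnn mu_pos.
  rewrite addn1 addSn ltnS; move/leq_trans; apply.
  rewrite leq_add2l; apply: leq_sum => j ne.
  by rewrite mnmBE mulmnE mnm1E eq_sym (negbTE ne) mul0n subn0.
move=> /IH [b [bm wb]]; exists (b + u)%MM; split.
  apply/mnm_lepP => j; move/mnm_lepP: bm => /(_ j); rewrite mnmDE mnmBE.
  move/mnm_lepP: um => /(_ j).
  by move=> h1 h2; rewrite -(subnK h1) leq_add2r.
by rewrite wdegD wb wdegU mu_wt mulSn addnC.
Qed.

Lemma qm_bound m : (wdeg wt m + n <= (qm m + n) * Pm)%N.
Proof.
have Hi i : (m i * wt i + 1 <= (m i %/ mu i + 1) * Pm)%N.
  rewrite -(mu_wt i); have h := ltn_ceil (m i) (mu_pos i); have := wt_pos i.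
  move: h; move: (m i %/ mu i)%N => q h w0; nia.
have H : (\sum_(i < n) (m i * wt i + 1) <= \sum_(i < n) (m i %/ mu i + 1) * Pm)%N.
  by apply: leq_sum => i _; exact: Hi.
rewrite big_split /= sum1_card card_ord -big_distrl big_split /= sum1_card card_ord in H.
exact: H.
Qed.

End Comb.
Lemma ipX (R : comNzRingType) (P : R -> Prop) s f p t :
  ideal_pow P s f -> P p -> ideal_pow P (s + t) (f * p ^+ t).
Proof.
move=> H Pp; elim: t => [|t IH]; first by rewrite addn0 expr0 mulr1.
by rewrite exprSr mulrA addnS -addn1; apply: ipS.
Qed.

Lemma ipprod (R : comNzRingType) (P : R -> Prop) (I : Type) (r : seq I) (g : I -> R) (e : I -> nat) :
  (forall i, P (g i)) -> ideal_pow P (\sum_(i <- r) e i)%N (\prod_(i <- r) g i ^+ e i).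
Proof.
move=> H; elim: r => [|x r IH]; first by rewrite big_nil; apply: ipall.
by rewrite !big_cons addnC mulrC; apply: ipX.
Qed.

Lemma ipsum_seq (R : comNzRingType) (P : R -> Prop) k (T : eqType) (s : seq T) (F : T -> R) :
  (forall x, x \in s -> ideal_pow P k (F x)) -> ideal_pow P k (\sum_(x <- s) F x).
Proof.
move=> H; rewrite big_seq; apply: (big_ind (ideal_pow P k)); [exact: ip0|exact: ipD|exact: H].
Qed.

Section Main.
Variables (K : fieldType) (n : nat) (lam : 'I_n -> nat).
Hypothesis lpos : forall i, (0 < lam i)%N.
Hypothesis n3 : (3 <= n)%N.
Hypothesis dgt : (n - 2 < \big[gcdn/0%N]_(i < n) lam i)%N.

Local Notation d := (\big[gcdn/0%N]_(i < n) lam i).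
Local Notation mu := (fun i => lam i %/ d)%N.
Local Notation w := (wt mu).
Local Notation P := (Pm mu).
Local Notation L := (d * P)%N.
Local Notation G := (ideal_gen [seq ('X_i : {mpoly K[n]}) ^+ lam i | i <- enum 'I_n]).

Lemma d_pos : (0 < d)%N.
Proof. exact: (leq_ltn_trans (leq0n _) dgt). Qed.

Lemma lam_mu i : lam i = (mu i * d)%N.
Proof. by rewrite /= divnK //; apply: (biggcdn_inf i). Qed.

Lemma mu_pos i : (0 < mu i)%N.
Proof. by have := lpos i; rewrite {1}lam_mu muln_gt0 => /andP []. Qed.

Lemma lam_w i : (lam i * w i = L)%N.
Proof. by rewrite {1}lam_mu mulnAC (mu_wt mu i) mulnC. Qed.

Lemma L_pos : (0 < L)%N.
Proof. rewrite muln_gt0 d_pos /=; apply: prodn_gt0 => i; exact: mu_pos. Qed.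

Lemma wdegU1 i : wdeg w (U_(i))%MM = w i.
Proof. by rewrite -[U_(i)%MM]mulm1n wdegU mul1n. Abort.

Lemma DXl i : D w L ('X_i ^+ lam i : {mpoly K[n]}).
Proof.
rewrite mpolyXn -(lam_w i) -wdegU; exact: DX.
Qed.

Lemma G1 f : G f -> D w L f.
Proof.
move=> [c ->]; apply: (big_ind (D w L)); [exact: D0| exact: DD|].
move=> j _; apply: DMl.
have : [seq ('X_i : {mpoly K[n]}) ^+ lam i | i <- enum 'I_n]`_j \in
        [seq ('X_i : {mpoly K[n]}) ^+ lam i | i <- enum 'I_n] by apply: mem_nth.
by move/mapP => [i _ ->]; apply: DXl.
Qed.

Lemma Ggen i : G ('X_i ^+ lam i).
Proof.
set s := [seq ('X_i : {mpoly K[n]}) ^+ lam i | i <- enum 'I_n].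
have hs : (i < size s)%N by rewrite size_map size_enum_ord.
exists (fun j => ((j : nat) == i)%:R).
rewrite (bigD1 (Ordinal hs)) //= eqxx mul1r big1 ?addr0.
  by rewrite (nth_map i) ?size_enum_ord // nth_ord_enum.
move=> j ne; case: eqP => [e|_]; last by rewrite mul0r.
by move: ne; rewrite -val_eqE /= e eqxx.
Qed.

Lemma G2 b : (L <= wdeg w b)%N -> I_lambda lam ('X_[b] : {mpoly K[n]}).
Proof.
move=> le; exists L, (fun i => if i == L then - ('X_[b] ^+ L) else 0).
split; first exact: L_pos.
split.
  move=> i0 /andP [i1 iL]; case: eqP => [->|_]; last exact: ip0.
  apply: ipN.
  have e : ('X_[b] : {mpoly K[n]}) ^+ L = \prod_(i <- index_enum 'I_n) ('X_i ^+ lam i) ^+ (w i * b i).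
    rewrite mpolyXE_id -prodrXl; apply: eq_bigr => i _.
    by rewrite -!exprM -(lam_w i); congr (_ ^+ _); nia.
  rewrite e; apply: (@ipmono _ _ _ (wdeg w b - L)); rewrite subnKC //.
  have -> : wdeg w b = (\sum_(i <- index_enum 'I_n) w i * b i)%N.
    by rewrite /wdeg; apply: eq_bigr => i _; rewrite mulnC.
  by apply: ipprod => i; apply: Ggen.
rewrite big_nat_recr /=; last exact: L_pos.
rewrite eqxx subnn expr0 mulr1 [X in _ + (X + _)]big_nat_cond.
rewrite [X in _ + (X + _)]big1 ?add0r ?addrN //.
by move=> i /andP [/andP [_ lt] _]; rewrite (ltn_eqF lt) mul0r.
Qed.
Lemma B k m : (k * L <= wdeg w m)%N -> ideal_pow (I_lambda lam) k ('X_[m] : {mpoly K[n]}).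
Proof.
elim: k m => [|k IH] m le; first exact: ipall.
have [b [bm Lb kb]] : exists b, [/\ (b <= m)%MM, (L <= wdeg w b)%N & (k * L <= wdeg w (m - b)%MM)%N].
  have [k0|kpos] := posnP k.
    exists m; split; [exact: lepm_refl | by move: le; rewrite k0 mul1n | by rewrite k0].
  have q : (d <= qm mu m)%N.
    have hb := qm_bound mu_pos m.
    rewrite leqNgt; apply/negP => lt.
    move: le hb lt dgt n3 kpos; move: (wdeg w m) (qm mu m) P d => W Q PP dd.
    nia.
  have [b [bm wb]] := sel mu_pos q.
  exists b; split => //; first by rewrite wb.
  rewrite wdegB // wb; move: le; rewrite mulSn; move: (wdeg w m) => W; lia.
rewrite -(submK bm) mpolyXD -addn1; apply: ipS; [exact: IH | exact: G2].
Qed.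

Lemma main_sec : normal_ideal (@I_lambda K n lam).
Proof.
move=> k k0 f [kk [a [kk0 [Ha Eq]]]].
have Df : D w (k * L) f.
  apply: (Dint kk0 _ Eq) => i hi.
  apply: (Dip _ (Ha i hi)) => g Hg; apply: (Dip _ Hg).
  move=> g' [kk' [a' [kk0' [Ha' Eq']]]]; apply: (Dint kk0' _ Eq') => j hj.
  exact: (Dip G1 (Ha' j hj)).
rewrite [f]mpolyE; apply: ipsum_seq => m mf.
rewrite -mul_mpolyC; apply: ipM; apply: B; exact: (Dsupp Df mf).
Qed.
End Main.

Theorem corollary4p4 (K : fieldType) (n : nat) (lam : 'I_n -> nat) :
  (3 <= n)%N ->
  (forall i, (0 < lam i)%N) ->
  (n - 2 < \big[gcdn/0%N]_(i < n) lam i)%N ->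
  normal_ideal (@I_lambda K n lam).
Proof. by move=> n3 lpos dgt; apply: main_sec. Qed.
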